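(* Let $R$ be a t-unital ring and $\widetilde R=\mathbb Z\oplus R$ its unitalization. Then the full subcategory of t-unital left $R$-modules is closed under kernels in the category of all (nonunital) left $R$-modules if and only if $R$ is a flat unital right $\widetilde R$-module.
   Context: Rings are associative, not necessarily unital; modules are not assumed unital. $\widetilde R=\mathbb Z\oplus R$ is the unital ring obtained by formally adjoining a unit, with $R$ a two-sided ideal; nonunital $R$-modules are the same as unital $\widetilde R$-modules. $R$ is t-unital if $R\otimes_R R\to R$ is an isomorphism. A left $R$-module $M$ is t-unital if $R\otimes_R M\to M$, $r\otimes m\mapsto rm$, is an isomorphism. *)

(* Defs.v *)
From HB Require Import structures.
From mathcomp Require Import all_boot all_order all_algebra.
Set Implicit Arguments. Unset Strict Implicit. Unset Printing Implicit Defensive.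
Import GRing.Theory.
Local Open Scope ring_scope.

Record NRing := {
  nr_carrier :> zmodType;
  nmul : nr_carrier -> nr_carrier -> nr_carrier;
  nmulA : forall x y z, nmul x (nmul y z) = nmul (nmul x y) z;
  nmulDl : forall x y z, nmul (x + y) z = nmul x z + nmul y z;
  nmulDr : forall x y z, nmul x (y + z) = nmul x y + nmul x z }.

Record LMod (R : NRing) := {
  lm_carrier :> zmodType;
  lact : R -> lm_carrier -> lm_carrier;
  lactDl : forall r s m, lact (r + s) m = lact r m + lact s m;
  lactDr : forall r m n, lact r (m + n) = lact r m + lact r n;
  lactA : forall r s m, lact (nmul r s) m = lact r (lact s m) }.

Definition lmod_linear (R : NRing) (M N : LMod R) (f : M -> N) : Prop :=
  (forall x y, f (x + y) = f x + f y) /\ (forall r x, f (lact r x) = lact r (f x)).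

(* Every element of X (x)_S M is a finite sum of pure
   tensors, represented by a formal sum s : seq (X * M).  Such a formal sum is
   zero in X (x)_S M iff it is killed by every S-balanced biadditive map
   (universal property of the tensor product). ---------- *)
Definition balanced (S : Type) (X M : zmodType) (ract : X -> S -> X)
  (lact' : S -> M -> M) (A : zmodType) (f : X -> M -> A) : Prop :=
  [/\ forall x y m, f (x + y) m = f x m + f y m,
      forall x m n, f x (m + n) = f x m + f x n &
      forall x a m, f (ract x a) m = f x (lact' a m)].

Definition tensor_zero (S : Type) (X M : zmodType) (ract : X -> S -> X)
  (lact' : S -> M -> M) (s : seq (X * M)) : Prop :=
  forall (A : zmodType) (f : X -> M -> A), balanced ract lact' f ->
    \sum_(p <- s) f p.1 p.2 = 0.

(* t-unital left R-module: the multiplication map R (x)_R M -> M,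
   r (x) m |-> r m, is an isomorphism (i.e. surjective with trivial kernel). *)
Definition tunital_mod (R : NRing) (M : LMod R) : Prop :=
  (forall m : M, exists s : seq (R * M), m = \sum_(p <- s) lact p.1 p.2) /\
  (forall s : seq (R * M), \sum_(p <- s) lact p.1 p.2 = 0 ->
     tensor_zero (fun x y : R => nmul x y) (@lact R M) s).

(* t-unital ring: R (x)_R R -> R is an isomorphism. *)
Definition tunital_ring (R : NRing) : Prop :=
  (forall m : R, exists s : seq (R * R), m = \sum_(p <- s) nmul p.1 p.2) /\
  (forall s : seq (R * R), \sum_(p <- s) nmul p.1 p.2 = 0 ->
     tensor_zero (fun x y : R => nmul x y) (fun x y : R => nmul x y) s).

Definition Rt (R : NRing) := (int * R)%type.
Definition rt_mul (R : NRing) (a b : Rt R) : Rt R :=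
  (a.1 * b.1, b.2 *~ a.1 + a.2 *~ b.1 + nmul a.2 b.2).
Definition rt_one (R : NRing) : Rt R := (1, 0).

Record ULModRt (R : NRing) := {
  um_carrier :> zmodType;
  uact : Rt R -> um_carrier -> um_carrier;
  uactDl : forall a b m, uact (a + b) m = uact a m + uact b m;
  uactDr : forall a m n, uact a (m + n) = uact a m + uact a n;
  uactA : forall a b m, uact (rt_mul a b) m = uact a (uact b m);
  uact1 : forall m, uact (rt_one R) m = m }.

Definition urt_linear (R : NRing) (N N' : ULModRt R) (g : N -> N') : Prop :=
  (forall x y, g (x + y) = g x + g y) /\ (forall a x, g (uact a x) = uact a (g x)).

Definition R_ract (R : NRing) (r : R) (a : Rt R) : R := r *~ a.1 + nmul r a.2.

(* R is flat as a right R~-module: R (x)_{R~} - preserves injections,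
   i.e. for every injective R~-linear g : N -> N', the induced map
   R (x)_{R~} N -> R (x)_{R~} N' has trivial kernel. *)
Definition flat_R_over_Rt (R : NRing) : Prop :=
  forall (N N' : ULModRt R) (g : N -> N'), urt_linear g -> injective g ->
    forall s : seq (R * N),
      tensor_zero (@R_ract R) (@uact R N') [seq (p.1, g p.2) | p <- s] ->
      tensor_zero (@R_ract R) (@uact R N) s.

(* The full subcategory of t-unital left R-modules is closed under kernels in
   the category of all left R-modules: for every R-linear f : M -> N between
   t-unital modules, every kernel of f (an injective R-linear i : K -> M with
   image exactly ker f) has t-unital source. *)
Definition tunital_closed_under_kernels (R : NRing) : Prop :=
  forall (M N K : LMod R) (f : M -> N) (i : K -> M),
    tunital_mod M -> tunital_mod N ->
    lmod_linear f -> lmod_linear i -> injective i ->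
    (forall m : M, f m = 0 <-> exists k : K, i k = m) ->
    tunital_mod K.

(* Main.v *)
Require Import Defs.
From mathcomp Require Import all_boot all_order all_algebra.
From HB Require Import structures.
From mathcomp Require Import boolp.
Set Implicit Arguments. Unset Strict Implicit. Unset Printing Implicit Defensive.
Import GRing.Theory.
Local Open Scope ring_scope.

Section Add.
Variables (G H : zmodType) (f : G -> H).
Hypothesis fD : forall x y, f (x + y) = f x + f y.
Lemma af0 : f 0 = 0.
Proof. by apply/eqP; rewrite -(addrI (f 0) (_ : f 0 + f 0 = f 0 + 0)) // addr0 -fD addr0. Qed.
Lemma afN x : f (- x) = - f x.
Proof. by apply/eqP; rewrite -subr_eq0 opprK -fD addNr af0. Qed.
Lemma afB x y : f (x - y) = f x - f y.
Proof. by rewrite fD afN. Qed.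
Lemma afMn x n : f (x *+ n) = f x *+ n.
Proof. by elim: n => [|n IH]; rewrite ?mulr0n ?af0 // !mulrS fD IH. Qed.
Lemma afMz x n : f (x *~ n) = f x *~ n.
Proof. by case: n => n; rewrite ?NegzE ?mulrNz /= ?afN afMn. Qed.
Lemma afsum (I : Type) (s : seq I) (F : I -> G) :
  f (\sum_(i <- s) F i) = \sum_(i <- s) f (F i).
Proof. exact: (big_morph f fD af0). Qed.
End Add.

Record zsub (G : zmodType) := ZSub {
  zs :> G -> Prop; zs0 : zs 0; zsB : forall x y, zs x -> zs y -> zs (x - y) }.

Lemma zsN (G : zmodType) (K : zsub G) x : K x -> K (- x).
Proof. by move=> Kx; rewrite -sub0r; apply: zsB => //; apply: zs0. Qed.
Lemma zsD (G : zmodType) (K : zsub G) x y : K x -> K y -> K (x + y).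
Proof. by move=> Kx Ky; rewrite -[y]opprK; apply: zsB => //; apply: zsN. Qed.

Definition quo (G : zmodType) (K : zsub G) :=
  {P : G -> Prop | exists x, P = fun y => K (x - y)}.
Section Quo.
Variables (G : zmodType) (K : zsub G).
Definition qcls (x : G) : quo K := exist _ (fun y => K (x - y)) (ex_intro _ x erefl).
Lemma qcls_eq x y : qcls x = qcls y <-> K (x - y).
Proof.
split.
  move=> /(congr1 (@proj1_sig _ _)) /= E.
  have := congr1 (fun P => P y) E; rewrite /= subrr => ->; exact: zs0.
move=> Kxy; apply: eq_exist; apply: funext => z; apply: propext; split => H.
  have -> : y - z = - (x - y) + (x - z) by rewrite opprB addrA subrK.
  by apply: zsD => //; apply: zsN.
have -> : x - z = (x - y) + (y - z) by rewrite addrA subrK.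
exact: zsD.
Qed.
Definition qrepr (q : quo K) : G := proj1_sig (cid (proj2_sig q)).
Lemma qreprK q : qcls (qrepr q) = q.
Proof.
rewrite /qrepr; case: (cid _) => x /= E; case: q E => P Pp /= E.
by apply: eq_exist; rewrite E.
Qed.
Lemma quo_ind (P : quo K -> Prop) : (forall x, P (qcls x)) -> forall q, P q.
Proof. by move=> H q; rewrite -(qreprK q). Qed.
Definition qadd (a b : quo K) := qcls (qrepr a + qrepr b).
Definition qopp (a : quo K) := qcls (- qrepr a).
Definition qzero := qcls 0.
Lemma qrepr_cls x : K (qrepr (qcls x) - x).
Proof. by apply/qcls_eq; rewrite qreprK. Qed.
Lemma qaddE x y : qadd (qcls x) (qcls y) = qcls (x + y).
Proof.
apply/qcls_eq; rewrite opprD addrACA; apply: zsD; exact: qrepr_cls.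
Qed.
Lemma qoppE x : qopp (qcls x) = qcls (- x).
Proof. apply/qcls_eq; rewrite opprK addrC -opprB; apply: zsN; exact: qrepr_cls. Qed.
Lemma qaddA : associative qadd.
Proof. by elim/quo_ind=> x; elim/quo_ind=> y; elim/quo_ind=> z; rewrite !qaddE addrA. Qed.
Lemma qaddC : commutative qadd.
Proof. by elim/quo_ind=> x; elim/quo_ind=> y; rewrite !qaddE addrC. Qed.
Lemma qadd0 : left_id qzero qadd.
Proof. by elim/quo_ind=> x; rewrite qaddE add0r. Qed.
Lemma qaddN : left_inverse qzero qopp qadd.
Proof. by elim/quo_ind=> x; rewrite qoppE qaddE addNr. Qed.
End Quo.
HB.instance Definition _ (G : zmodType) (K : zsub G) := gen_eqMixin (quo K).
HB.instance Definition _ (G : zmodType) (K : zsub G) := gen_choiceMixin (quo K).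
HB.instance Definition _ (G : zmodType) (K : zsub G) :=
  GRing.isZmodule.Build (quo K) (@qaddA G K) (@qaddC G K) (@qadd0 G K) (@qaddN G K).

Section QuoLemmas.
Variables (G : zmodType) (K : zsub G).
Lemma qclsD x y : qcls K (x + y) = qcls K x + qcls K y.
Proof. by rewrite -qaddE. Qed.
Lemma qcls0 : qcls K 0 = 0. Proof. by []. Qed.
Lemma qcls0P x : qcls K x = 0 <-> K x.
Proof. by rewrite -qcls0 qcls_eq subr0. Qed.
End QuoLemmas.

Definition subz (G : zmodType) (K : zsub G) := {x : G | K x}.
Section Sub.
Variables (G : zmodType) (K : zsub G).
Definition sadd (a b : subz K) : subz K :=
  exist _ (proj1_sig a + proj1_sig b) (zsD (proj2_sig a) (proj2_sig b)).
Definition sopp (a : subz K) : subz K := exist _ (- proj1_sig a) (zsN (proj2_sig a)).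
Definition szero : subz K := exist _ 0 (zs0 K).
Lemma sval_inj : injective (@proj1_sig _ _ : subz K -> G).
Proof. by case=> x px [y py] /= E; apply: eq_exist. Qed.
Lemma saddA : associative sadd.
Proof. by move=> a b c; apply: sval_inj; rewrite /= addrA. Qed.
Lemma saddC : commutative sadd.
Proof. by move=> a b; apply: sval_inj; rewrite /= addrC. Qed.
Lemma sadd0 : left_id szero sadd.
Proof. by move=> a; apply: sval_inj; rewrite /= add0r. Qed.
Lemma saddN : left_inverse szero sopp sadd.
Proof. by move=> a; apply: sval_inj; rewrite /= addNr. Qed.
End Sub.
HB.instance Definition _ (G : zmodType) (K : zsub G) := gen_eqMixin (subz K).
HB.instance Definition _ (G : zmodType) (K : zsub G) := gen_choiceMixin (subz K).
HB.instance Definition _ (G : zmodType) (K : zsub G) :=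
  GRing.isZmodule.Build (subz K) (@saddA G K) (@saddC G K) (@sadd0 G K) (@saddN G K).
Lemma svalD (G : zmodType) (K : zsub G) (a b : subz K) :
  proj1_sig (a + b) = proj1_sig a + proj1_sig b.
Proof. by []. Qed.

Definition negs (X : zmodType) (Y : Type) (s : seq (X * Y)) : seq (X * Y) :=
  [seq (- p.1, p.2) | p <- s].
Definition gmap (X : Type) (Y Z : Type) (g : Y -> Z) (s : seq (X * Y)) : seq (X * Z) :=
  [seq (p.1, g p.2) | p <- s].

Section Tensor.
Variables (S : Type) (X M : zmodType) (ract : X -> S -> X) (la : S -> M -> M).
Definition tsum (A : zmodType) (f : X -> M -> A) (s : seq (X * M)) : A :=
  \sum_(p <- s) f p.1 p.2.
Definition teq (s t : seq (X * M)) : Prop :=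
  forall (A : zmodType) (f : X -> M -> A), balanced ract la f -> tsum f s = tsum f t.

Lemma bal1 (A : zmodType) (f : X -> M -> A) : balanced ract la f -> forall x y m, f (x + y) m = f x m + f y m.
Proof. by case. Qed.
Lemma bal2 (A : zmodType) (f : X -> M -> A) : balanced ract la f -> forall x m n, f x (m + n) = f x m + f x n.
Proof. by case. Qed.
Lemma bal3 (A : zmodType) (f : X -> M -> A) : balanced ract la f -> forall x a m, f (ract x a) m = f x (la a m).
Proof. by case. Qed.

Lemma tsum_cat (A : zmodType) (f : X -> M -> A) s t : tsum f (s ++ t) = tsum f s + tsum f t.
Proof. by rewrite /tsum big_cat. Qed.
Lemma tsum_negs (A : zmodType) (f : X -> M -> A) s : balanced ract la f -> tsum f (negs s) = - tsum f s.
Proof.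
move=> bf; rewrite /tsum big_map -sumrN; apply: eq_bigr => p _ /=. idtac.
have := (afN (fun x y => bal1 bf x y p.2) p.1). move=> /= ->. by [].
Qed.
Lemma tsum_nil (A : zmodType) (f : X -> M -> A) : tsum f [::] = 0.
Proof. by rewrite /tsum big_nil. Qed.
Lemma tsum_cons (A : zmodType) (f : X -> M -> A) p s : tsum f (p :: s) = f p.1 p.2 + tsum f s.
Proof. by rewrite /tsum big_cons. Qed.

Lemma teq_refl s : teq s s. Proof. by []. Qed.
Lemma teq_sym s t : teq s t -> teq t s. Proof. by move=> H A f bf; rewrite H. Qed.
Lemma teq_trans s t u : teq s t -> teq t u -> teq s u.
Proof. by move=> H1 H2 A f bf; rewrite H1 ?H2. Qed.

Lemma tz_teq s : tensor_zero ract la s <-> teq s [::].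
Proof.
split=> H A f bf; first by rewrite tsum_nil; exact: H A f bf.
by have := H A f bf; rewrite tsum_nil.
Qed.

Definition tens := {P : seq (X * M) -> Prop | exists s, P = teq s}.
Definition tcls (s : seq (X * M)) : tens := exist _ (teq s) (ex_intro _ s erefl).
Lemma tcls_eq s t : tcls s = tcls t <-> teq s t.
Proof.
split.
  move=> /(congr1 (@proj1_sig _ _)) /= E.
  have := congr1 (fun P => P t) E => /= ->; exact: teq_refl.
move=> st; apply: eq_exist; apply: funext => u; apply: propext; split.
  by apply: teq_trans; apply: teq_sym.
exact: teq_trans.
Qed.
Definition trepr (x : tens) : seq (X * M) := proj1_sig (cid (proj2_sig x)).
Lemma treprK x : tcls (trepr x) = x.
Proof.
rewrite /trepr; case: (cid _) => s /= E; case: x E => P Pp /= E.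
by apply: eq_exist; rewrite E.
Qed.
Lemma tens_ind (P : tens -> Prop) : (forall s, P (tcls s)) -> forall x, P x.
Proof. by move=> H x; rewrite -(treprK x). Qed.
Lemma trepr_cls s : teq (trepr (tcls s)) s.
Proof. by apply/tcls_eq; rewrite treprK. Qed.

Definition tadd (a b : tens) := tcls (trepr a ++ trepr b).
Definition topp (a : tens) := tcls (negs (trepr a)).
Definition tzero := tcls [::].
Lemma taddE s t : tadd (tcls s) (tcls t) = tcls (s ++ t).
Proof.
apply/tcls_eq => A f bf; rewrite !tsum_cat.
by rewrite (trepr_cls s bf) (trepr_cls t bf).
Qed.
Lemma toppE s : topp (tcls s) = tcls (negs s).
Proof. by apply/tcls_eq => A f bf; rewrite !tsum_negs // (trepr_cls s bf). Qed.
Lemma taddA : associative tadd.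
Proof. by elim/tens_ind=> x; elim/tens_ind=> y; elim/tens_ind=> z; rewrite !taddE catA. Qed.
Lemma taddC : commutative tadd.
Proof.
elim/tens_ind=> x; elim/tens_ind=> y; rewrite !taddE; apply/tcls_eq => A f bf.
by rewrite !tsum_cat addrC.
Qed.
Lemma tadd0 : left_id tzero tadd.
Proof. by elim/tens_ind=> x; rewrite taddE. Qed.
Lemma taddN : left_inverse tzero topp tadd.
Proof.
elim/tens_ind=> x; rewrite toppE taddE; apply/tcls_eq => A f bf.
by rewrite tsum_cat tsum_negs // addNr tsum_nil.
Qed.
End Tensor.

HB.instance Definition _ S X M ract la := gen_eqMixin (@tens S X M ract la).
HB.instance Definition _ S X M ract la := gen_choiceMixin (@tens S X M ract la).
HB.instance Definition _ S X M ract la :=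
  GRing.isZmodule.Build (@tens S X M ract la) (@taddA S X M ract la)
   (@taddC S X M ract la) (@tadd0 S X M ract la) (@taddN S X M ract la).

Section TensorLemmas.
Variables (S : Type) (X M : zmodType) (ract : X -> S -> X) (la : S -> M -> M).
Local Notation T := (tens ract la).
Local Notation tcls := (@tcls S X M ract la).
Lemma tclsD s t : tcls (s ++ t) = tcls s + tcls t.
Proof. by rewrite -taddE. Qed.
Lemma tcls0 : tcls [::] = 0. Proof. by []. Qed.
Lemma tclsN s : tcls (negs s) = - tcls s.
Proof. by rewrite -toppE. Qed.
Lemma tz_cls s : tensor_zero ract la s <-> tcls s = 0.
Proof. by rewrite tz_teq -tcls0 tcls_eq. Qed.

Definition tlift (A : zmodType) (f : X -> M -> A) (x : T) : A := tsum f (trepr x).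
Lemma tliftE (A : zmodType) (f : X -> M -> A) s : balanced ract la f -> tlift f (tcls s) = tsum f s.
Proof. by move=> bf; rewrite /tlift (trepr_cls s bf). Qed.
Lemma tliftD (A : zmodType) (f : X -> M -> A) : balanced ract la f ->
  forall x y, tlift f (x + y) = tlift f x + tlift f y.
Proof.
move=> bf; elim/tens_ind=> s; elim/tens_ind=> t.
by rewrite -tclsD !tliftE // tsum_cat.
Qed.

Definition tpure (x : X) (m : M) : T := tcls [:: (x, m)].
Lemma tpure_bal : balanced ract la tpure.
Proof.
split=> *; rewrite /tpure -?tclsD; apply/tcls_eq => A f bf;
 rewrite /tsum !big_cons !big_nil /= ?addr0;
  [exact: (bal1 bf)|exact: (bal2 bf)|exact: (bal3 bf)].
Qed.
Lemma tsum_pure s : tsum tpure s = tcls s.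
Proof.
elim: s => [|p s IH]; first by rewrite tsum_nil.
by rewrite tsum_cons IH /tpure -tclsD; case: p.
Qed.
End TensorLemmas.

Section NR.
Variable R : NRing.
Lemma nmul0r (x : R) : nmul 0 x = 0.
Proof. exact: (af0 (fun a b => nmulDl a b x)). Qed.
Lemma nmulr0 (x : R) : nmul x 0 = 0.
Proof. exact: (af0 (nmulDr x)). Qed.
Lemma nmulMz_r (x y : R) n : nmul x (y *~ n) = nmul x y *~ n.
Proof. exact: (afMz (nmulDr x)). Qed.
Lemma nmulMz_l (x y : R) n : nmul (x *~ n) y = nmul x y *~ n.
Proof. exact: (afMz (fun a b => nmulDl a b y)). Qed.
Lemma nmul_sumr (x : R) (I : Type) (s : seq I) F :
  nmul x (\sum_(i <- s) F i) = \sum_(i <- s) nmul x (F i).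
Proof. exact: (afsum (nmulDr x)). Qed.
Lemma nmul_suml (x : R) (I : Type) (s : seq I) F :
  nmul (\sum_(i <- s) F i) x = \sum_(i <- s) nmul (F i) x.
Proof. exact: (afsum (fun a b => nmulDl a b x)). Qed.
End NR.

Section LM.
Variables (R : NRing) (M : LMod R).
Lemma lact0r (m : M) : lact 0 m = 0.
Proof. exact: (af0 (fun a b => lactDl a b m)). Qed.
Lemma lactr0 (r : R) : lact r (0 : M) = 0.
Proof. exact: (af0 (lactDr r)). Qed.
Lemma lactMz_r (r : R) (m : M) n : lact r (m *~ n) = lact r m *~ n.
Proof. exact: (afMz (lactDr r)). Qed.
Lemma lactMz_l (r : R) (m : M) n : lact (r *~ n) m = lact r m *~ n.
Proof. exact: (afMz (fun a b => lactDl a b m)). Qed.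
Lemma lact_sumr (r : R) (I : Type) (s : seq I) (F : I -> M) :
  lact r (\sum_(i <- s) F i) = \sum_(i <- s) lact r (F i).
Proof. exact: (afsum (lactDr r)). Qed.
Lemma lact_suml (m : M) (I : Type) (s : seq I) (F : I -> R) :
  lact (\sum_(i <- s) F i) m = \sum_(i <- s) lact (F i) m.
Proof. exact: (afsum (fun a b => lactDl a b m)). Qed.
End LM.

Section TensLMod.
Variables (R : NRing) (S : Type) (M : zmodType) (ract : R -> S -> R) (la : S -> M -> M).
Hypothesis compat : forall r x a, nmul r (ract x a) = ract (nmul r x) a.
Local Notation T := (tens ract la).
Definition lmap (r : R) (s : seq (R * M)) := [seq (nmul r p.1, p.2) | p <- s].
Lemma tsum_lmap (A : zmodType) (f : R -> M -> A) r s :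
  tsum f (lmap r s) = tsum (fun x m => f (nmul r x) m) s.
Proof. by rewrite /tsum big_map. Qed.
Lemma bal_lmap (A : zmodType) (f : R -> M -> A) r : balanced ract la f ->
  balanced ract la (fun x m => f (nmul r x) m).
Proof.
move=> bf; split=> *; first by rewrite nmulDr (bal1 bf).
  by rewrite (bal2 bf).
by rewrite compat (bal3 bf).
Qed.
Lemma teq_lmap r s t : teq ract la s t -> teq ract la (lmap r s) (lmap r t).
Proof. by move=> H A f bf; rewrite !tsum_lmap; apply: H; apply: bal_lmap. Qed.
Definition tact (r : R) (x : T) : T := tcls ract la (lmap r (trepr x)).
Lemma tactE r s : tact r (tcls ract la s) = tcls ract la (lmap r s).
Proof. by apply/tcls_eq; apply: teq_lmap; apply: trepr_cls. Qed.
Lemma tactDl r s x : tact (r + s) x = tact r x + tact s x.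
Proof.
elim/tens_ind: x => u; rewrite !tactE -tclsD; apply/tcls_eq => A f bf.
rewrite tsum_cat !tsum_lmap /tsum -big_split; apply: eq_bigr => p _ /=.
by rewrite nmulDl (bal1 bf).
Qed.
Lemma tactDr r x y : tact r (x + y) = tact r x + tact r y.
Proof.
elim/tens_ind: x => u; elim/tens_ind: y => v.
by rewrite -tclsD !tactE -tclsD /lmap map_cat.
Qed.
Lemma tactA r s x : tact (nmul r s) x = tact r (tact s x).
Proof.
elim/tens_ind: x => u; rewrite !tactE /lmap -map_comp; congr (tcls _ _ _).
by apply: eq_map => p /=; rewrite nmulA.
Qed.
Definition tensLMod : LMod R := Build_LMod tactDl tactDr tactA.
Lemma tact_pure r x m : tact r (tpure ract la x m) = tpure ract la (nmul r x) m.
Proof. by rewrite /tpure tactE. Qed.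
End TensLMod.

Section Im.
Variables (S : Type) (X M N : zmodType) (ract : X -> S -> X) (la : S -> M -> M) (g : N -> M).
Definition imP (t : tens ract la) : Prop :=
  exists u : seq (X * N), t = tcls ract la (gmap g u).
Lemma imP0 : imP 0. Proof. by exists [::]. Qed.
Lemma imPB x y : imP x -> imP y -> imP (x - y).
Proof.
move=> [u ->] [v ->]; exists (u ++ negs v).
rewrite /gmap map_cat tclsD -tclsN /negs.
by congr (_ + tcls _ _ _); elim: v => //= p v ->.
Qed.
Definition imZ := ZSub imP0 imPB.
Lemma imP_pure x n : imP (tpure ract la x (g n)).
Proof. by exists [:: (x, n)]. Qed.
End Im.

Lemma imP_act (R : NRing) (S : Type) (M N : zmodType) (ract : R -> S -> R) (la : S -> M -> M)
  (g : N -> M) (compat : forall r x a, nmul r (ract x a) = ract (nmul r x) a) r t : imP (ract:=ract) (la:=la) g t -> imP (ract:=ract) (la:=la) g (tact r t).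
Proof.
move=> [u ->]; exists (lmap r u); rewrite tactE // /lmap /gmap.
by congr (tcls _ _ _); elim: u => //= p u ->.
Qed.

Section QS.
Variables (R : NRing) (M : LMod R) (K : zsub M).
Hypothesis Kact : forall r x, K x -> K (lact r x).
Definition qact (r : R) (q : quo K) : quo K := qcls K (lact r (qrepr q)).
Lemma qactE r x : qact r (qcls K x) = qcls K (lact r x).
Proof. by apply/qcls_eq; rewrite -(afB (lactDr r)); apply: Kact; apply: qrepr_cls. Qed.
Lemma qactDl r s q : qact (r + s) q = qact r q + qact s q.
Proof. by elim/quo_ind: q => x; rewrite !qactE lactDl qclsD. Qed.
Lemma qactDr r p q : qact r (p + q) = qact r p + qact r q.
Proof. by elim/quo_ind: p => x; elim/quo_ind: q => y; rewrite -qclsD !qactE lactDr qclsD. Qed.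
Lemma qactA r s q : qact (nmul r s) q = qact r (qact s q).
Proof. by elim/quo_ind: q => x; rewrite !qactE lactA. Qed.
Definition quoLMod : LMod R := Build_LMod qactDl qactDr qactA.

Definition sact (r : R) (x : subz K) : subz K :=
  exist _ (lact r (proj1_sig x)) (Kact r (proj2_sig x)).
Lemma sactDl r s x : sact (r + s) x = sact r x + sact s x.
Proof. by apply: sval_inj; rewrite /= lactDl. Qed.
Lemma sactDr r x y : sact r (x + y) = sact r x + sact r y.
Proof. by apply: sval_inj; rewrite /= lactDr. Qed.
Lemma sactA r s x : sact (nmul r s) x = sact r (sact s x).
Proof. by apply: sval_inj; rewrite /= lactA. Qed.
Definition subLMod : LMod R := Build_LMod sactDl sactDr sactA.
End QS.

Section ToU.
Variables (R : NRing) (M : LMod R).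
Definition uact_of (a : Rt R) (m : M) : M := m *~ a.1 + lact a.2 m.
Lemma uoDl a b m : uact_of (a + b) m = uact_of a m + uact_of b m.
Proof. by rewrite /uact_of /= mulrzDr lactDl addrACA. Qed.
Lemma uoDr a m n : uact_of a (m + n) = uact_of a m + uact_of a n.
Proof. by rewrite /uact_of mulrzDl lactDr addrACA. Qed.
Lemma uoA a b m : uact_of (rt_mul a b) m = uact_of a (uact_of b m).
Proof.
rewrite /uact_of /rt_mul /= !lactDl lactDr lactA lactMz_r lactMz_l mulrzDl.
rewrite !lactMz_l (mulrC a.1) mulrzA. by rewrite !addrA.
Qed.
Lemma uo1 m : uact_of (rt_one R) m = m.
Proof. by rewrite /uact_of /= lact0r addr0. Qed.
Definition toU : ULModRt R := Build_ULModRt uoDl uoDr uoA uo1.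
End ToU.

Section Conv.
Variable R : NRing.
Lemma compat_nmul (r x a : R) : nmul r (nmul x a) = nmul (nmul r x) a.
Proof. exact: nmulA. Qed.
Lemma compat_Rt (r x : R) (a : Rt R) : nmul r (R_ract x a) = R_ract (nmul r x) a.
Proof. by rewrite /R_ract nmulDr nmulMz_r nmulA. Qed.
Lemma R_ractD (x y : R) a : R_ract (x + y) a = R_ract x a + R_ract y a.
Proof. by rewrite /R_ract mulrzDl nmulDl addrACA. Qed.
Lemma R_ract0 (x r : R) : R_ract x (0, r) = nmul x r.
Proof. by rewrite /R_ract /= mulr0z add0r. Qed.

Variable M : LMod R.
Lemma bal_RU (A : zmodType) (f : R -> M -> A) :
  balanced (fun x y : R => nmul x y) (@lact R M) f ->
  balanced (@R_ract R) (@uact R (toU M)) f.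
Proof.
move=> bf; split; [exact: (bal1 bf)|exact: (bal2 bf)|] => x a m.
rewrite /R_ract /= /uact_of (bal1 bf) (bal2 bf) (bal3 bf).
by rewrite (afMz (fun u v => bal1 bf u v m)) (afMz (bal2 bf x)).
Qed.
Lemma bal_UR (A : zmodType) (f : R -> M -> A) :
  balanced (@R_ract R) (@uact R (toU M)) f ->
  balanced (fun x y : R => nmul x y) (@lact R M) f.
Proof.
move=> bf; split; [exact: (bal1 bf)|exact: (bal2 bf)|] => x a m.
rewrite -R_ract0 (bal3 bf) /= /uact_of /= mulr0z add0r //.
Qed.
Lemma tz_conv s : tensor_zero (fun x y : R => nmul x y) (@lact R M) s <->
  tensor_zero (@R_ract R) (@uact R (toU M)) s.
Proof.
split=> H A f bf; apply: H; [exact: bal_UR|exact: bal_RU].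
Qed.
End Conv.

Section Phi.
Variables (R : NRing) (tR : tunital_ring R) (N' : ULModRt R).
Local Notation TL := (tensLMod (@uact R N') (@compat_Rt R)).
Local Notation tp := (tpure (@R_ract R) (@uact R N')).
Local Notation tcl := (tcls (@R_ract R) (@uact R N')).

Definition dec (x : R) : seq (R * R) := proj1_sig (cid (tR.1 x)).
Lemma decE x : x = \sum_(p <- dec x) nmul p.1 p.2.
Proof. by rewrite /dec; case: (cid _). Qed.

Lemma tp1 x y n : tp (x + y) n = tp x n + tp y n.
Proof. exact: (bal1 (tpure_bal (@R_ract R) (@uact R N'))). Qed.
Lemma tp2 x n m : tp x (n + m) = tp x n + tp x m.
Proof. exact: (bal2 (tpure_bal (@R_ract R) (@uact R N'))). Qed.
Lemma tp3 x a n : tp (R_ract x a) n = tp x (uact a n).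
Proof. exact: (bal3 (tpure_bal (@R_ract R) (@uact R N'))). Qed.
Lemma tact_tp r x n : @lact R TL r (tp x n) = tp (nmul r x) n.
Proof. exact: (@tact_pure _ _ _ _ _ (@compat_Rt R)). Qed.

Variables (A : zmodType) (F : R -> TL -> A).
Hypothesis bF : balanced (fun x y : R => nmul x y) (@lact R TL) F.

Lemma bal_Fn n : balanced (fun x y : R => nmul x y) (fun x y : R => nmul x y)
  (fun a b => F a (tp b n)).
Proof.
split=> *; first by rewrite (bal1 bF).
  by rewrite tp1 (bal2 bF).
by rewrite (bal3 bF) tact_tp.
Qed.

Lemma wd n u v : \sum_(p <- u) nmul p.1 p.2 = \sum_(p <- v) nmul p.1 p.2 ->
  \sum_(p <- u) F p.1 (tp p.2 n) = \sum_(p <- v) F p.1 (tp p.2 n).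
Proof.
move=> E; apply/eqP; rewrite -subr_eq0; apply/eqP.
have bn : balanced (fun x y : R => nmul x y) (fun x y : R => nmul x y)
   (fun x y : R => nmul x y).
  by split=> *; rewrite ?nmulDl ?nmulDr ?nmulA.
have Z : \sum_(p <- u ++ negs v) nmul p.1 p.2 = 0.
  change (tsum (fun x y : R => nmul x y) (u ++ negs v) = 0).
  by rewrite tsum_cat (tsum_negs v bn) /tsum E subrr.
have := tR.2 _ Z _ _ (bal_Fn n).
change (tsum (fun a b => F a (tp b n)) (u ++ negs v) = 0 -> tsum (fun a b => F a (tp b n)) u - tsum (fun a b => F a (tp b n)) v = 0).
by rewrite tsum_cat (tsum_negs v (bal_Fn n)).
Qed.

Definition Hf x n := \sum_(p <- dec x) F p.1 (tp p.2 n).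
Lemma HE x n u : x = \sum_(p <- u) nmul p.1 p.2 -> Hf x n = \sum_(p <- u) F p.1 (tp p.2 n).
Proof. by move=> Ex; apply: wd; rewrite -decE. Qed.
Lemma Hbal : balanced (@R_ract R) (@uact R N') Hf.
Proof.
split.
- move=> x y n; rewrite (@HE _ _ (dec x ++ dec y)); first by rewrite big_cat.
  by rewrite big_cat -!decE.
- move=> x n m; rewrite /Hf -big_split; apply: eq_bigr => p _.
  by rewrite tp2 (bal2 bF).
move=> x a n; rewrite (@HE _ _ [seq (p.1, R_ract p.2 a) | p <- dec x]).
  by rewrite /Hf big_map; apply: eq_bigr => p _ /=; rewrite tp3.
rewrite big_map /=.
under eq_bigr do rewrite compat_Rt.
by rewrite -(afsum (fun u v => R_ractD u v a)) -decE.
Qed.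

Definition Phi (t : TL) : A := tlift Hf t.
Lemma PhiD x y : Phi (x + y) = Phi x + Phi y.
Proof. exact: (tliftD Hbal). Qed.
Lemma Phi_cls s : Phi (tcl s) = tsum Hf s.
Proof. exact: (tliftE s Hbal). Qed.
Lemma PhiE r t : Phi (@lact R TL r t) = F r t.
Proof.
elim/tens_ind: t => s.
rewrite /= (@tactE _ _ _ _ _ (@compat_Rt R)) Phi_cls tsum_lmap.
rewrite -[X in F r X]tsum_pure /tsum (afsum (bal2 bF r)).
apply: eq_bigr => p _; rewrite (@HE _ _ [:: (r, p.1)]) ?big_seq1 //.
Qed.
Lemma Phi_im (N : zmodType) (g : N -> N') :
  (forall a b n, F a (tp b (g n)) = 0) -> forall u, Phi (tcl (gmap g u)) = 0.
Proof.
move=> Hg u; rewrite Phi_cls /tsum big_map big1 // => p _ /=.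
by rewrite /Hf big1.
Qed.
End Phi.

Section TU.
Variables (R : NRing) (tR : tunital_ring R) (N' : ULModRt R).
Local Notation TL := (tensLMod (@uact R N') (@compat_Rt R)).
Local Notation tp := (tpure (@R_ract R) (@uact R N')).
Local Notation tcl := (tcls (@R_ract R) (@uact R N')).

Lemma TL_tunital : tunital_mod TL.
Proof.
split.
  elim/tens_ind => s.
  exists (flatten [seq [seq (q.1, tp q.2 p.2) | q <- dec tR p.1] | p <- s]).
  rewrite big_flatten big_map /= -tsum_pure /tsum; apply: eq_bigr => p _.
  rewrite big_map /=.
  under eq_bigr do rewrite (@tact_pure _ _ _ _ _ (@compat_Rt R)).
  by rewrite -(afsum (fun x y => tp1 x y p.2)) -decE.
move=> s Hs A F bF.
under eq_bigr do rewrite -(PhiE tR bF).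
by rewrite -(afsum (PhiD tR bF)) Hs (af0 (PhiD tR bF)).
Qed.

Variables (N : zmodType) (g : N -> N').
Definition CK : zsub TL := imZ (@R_ract R) (@uact R N') g.
Lemma CKact r (x : TL) : CK x -> CK (@lact R TL r x).
Proof. exact: (@imP_act R (Rt R) N' N (@R_ract R) (@uact R N') g (@compat_Rt R) r x). Qed.
Definition CL := @quoLMod R TL CK CKact.

Lemma CL_tunital : tunital_mod CL.
Proof.
split.
  elim/quo_ind => t.
  have [s Es] := TL_tunital.1 t.
  exists [seq (p.1, qcls CK p.2) | p <- s].
  rewrite Es big_map (afsum (@qclsD _ CK)); apply: eq_bigr => p _ /=.
  by rewrite (qactE CKact).
move=> s Hs A F bF.
pose F' (r : R) (t : TL) := F r (qcls CK t).
have bF' : balanced (fun x y : R => nmul x y) (@lact R TL) F'.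
  split=> *; rewrite /F'; first by rewrite (bal1 bF).
    by rewrite qclsD (bal2 bF).
  by rewrite (bal3 bF) /= (qactE CKact).
have E : \sum_(p <- s) F p.1 p.2 = \sum_(p <- s) Phi tR F' (@lact R TL p.1 (qrepr p.2)).
  by apply: eq_bigr => p _; rewrite (PhiE tR bF') /F' qreprK.
rewrite E -(afsum (PhiD tR bF')).
have : CK (\sum_(p <- s) @lact R TL p.1 (qrepr p.2)).
  apply/qcls0P; rewrite (afsum (@qclsD _ CK)); apply: etrans Hs; apply: eq_bigr => p _.
  by rewrite /= -(qactE CKact) qreprK.
move=> [u ->]; apply: (Phi_im tR bF') => a b n.
rewrite /F'; have -> : qcls CK (tp b (g n)) = 0 by apply/qcls0P; apply: imP_pure.
exact: (af0 (bal2 bF a)).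
Qed.
End TU.

Lemma pD (R : NRing) (x y : R) : ((0, x + y) : Rt R) = (0, x) + (0, y).
Proof. by []. Qed.
Lemma pM (R : NRing) (x : R) (a : Rt R) : rt_mul (0, x) a = (0, R_ract x a).
Proof. by rewrite /rt_mul /R_ract /= mul0r mulr0z add0r. Qed.
Lemma pM2 (R : NRing) (x c : R) : rt_mul (0, c) (0, x) = (0, nmul c x).
Proof. by rewrite pM R_ract0. Qed.

Section Dir1.
Variables (R : NRing) (tR : tunital_ring R) (Hc : tunital_closed_under_kernels R).
Variables (N N' : ULModRt R) (g : N -> N').
Hypotheses (gD : forall x y, g (x + y) = g x + g y)
  (gA : forall a x, g (uact a x) = uact a (g x)) (ginj : injective g).
Local Notation TL := (tensLMod (@uact R N') (@compat_Rt R)).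
Local Notation tp := (tpure (@R_ract R) (@uact R N')).
Local Notation tcl := (tcls (@R_ract R) (@uact R N')).
Definition KL := @subLMod R TL (CK g) (@CKact R N' N g).

Lemma Ktu : tunital_mod KL.
Proof.
apply: (@Hc TL (CL g) KL (qcls (CK g)) (fun k : KL => proj1_sig k)).
- exact: TL_tunital.
- exact: CL_tunital.
- split; [exact: qclsD|move=> r x; exact: (esym (qactE (@CKact R N' N g) r x))].
- by split.
- exact: sval_inj.
move=> m; split.
  by move/qcls0P => H; exists (exist _ m H).
by move=> [k <-]; apply/qcls0P; exact: (proj2_sig k).
Qed.

Definition mub (x : R) (n : N') : N' := uact (0, x) n.
Lemma mub_bal : balanced (@R_ract R) (@uact R N') mub.
Proof.
split=> *; rewrite /mub; first by rewrite pD uactDl.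
  by rewrite uactDr.
by rewrite -uactA pM.
Qed.
Definition mu (t : TL) : N' := tlift mub t.
Lemma muD x y : mu (x + y) = mu x + mu y.
Proof. exact: (tliftD mub_bal). Qed.
Lemma mu_act c t : mu (@lact R TL c t) = uact (0, c) (mu t).
Proof.
elim/tens_ind: t => s.
rewrite /mu /= (@tactE _ _ _ _ _ (@compat_Rt R)) !(tliftE _ mub_bal) tsum_lmap.
rewrite /tsum (afsum (@uactDr R N' (0, c))); apply: eq_bigr => p _.
by rewrite /mub -uactA pM2.
Qed.
Lemma mu_tp b n : mu (tp b n) = uact (0, b) n.
Proof. by rewrite /mu (tliftE _ mub_bal) /tsum big_seq1. Qed.

Lemma phi_ex (k : KL) : exists n, g n = mu (proj1_sig k).
Proof.
case: k => t [u Eu] /=; rewrite Eu.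
exists (\sum_(p <- u) uact (0, p.1) p.2).
rewrite /mu (tliftE _ mub_bal) /tsum big_map (afsum gD); apply: eq_bigr => p _.
by rewrite gA.
Qed.
Definition phi (k : KL) : N := proj1_sig (cid (phi_ex k)).
Lemma phiE k : g (phi k) = mu (proj1_sig k).
Proof. by rewrite /phi; case: (cid _). Qed.
Lemma phiD k k' : phi (k + k') = phi k + phi k'.
Proof. by apply: ginj; rewrite gD !phiE svalD muD. Qed.
Lemma phi_act c k : phi (@lact R KL c k) = uact (0, c) (phi k).
Proof. by apply: ginj; rewrite gA !phiE /= mu_act. Qed.

Definition kk (b : R) (n : N) : KL :=
  exist _ (tp b (g n)) (imP_pure (@R_ract R) (@uact R N') g b n).
Lemma phi_kk b n : phi (kk b n) = uact (0, b) n.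
Proof. by apply: ginj; rewrite phiE /= mu_tp gA. Qed.

Lemma dir1_main s : tensor_zero (@R_ract R) (@uact R N') (gmap g s) ->
  tensor_zero (@R_ract R) (@uact R N) s.
Proof.
move=> Hs A f bf.
pose SK := flatten [seq [seq (q.1, kk q.2 p.2) | q <- dec tR p.1] | p <- s].
have sumK : \sum_(p <- SK) @lact R KL p.1 p.2 = 0.
  apply: sval_inj; rewrite (afsum (@svalD _ (CK g))) /=.
  apply: etrans (_ : _ = tcl (gmap g s)) _; last exact/tz_cls.
  rewrite -tsum_pure /tsum big_map /SK.
  rewrite big_flatten big_map; apply: eq_bigr => p _ /=.
  rewrite big_map /=.
  under eq_bigr do rewrite (@tact_pure _ _ _ _ _ (@compat_Rt R)).
  by rewrite -(afsum (fun x y => tp1 x y (g p.2))) -decE.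
pose FK (r : R) (k : KL) := f r (phi k).
have bFK : balanced (fun x y : R => nmul x y) (@lact R KL) FK.
  split=> *; rewrite /FK; first by rewrite (bal1 bf).
    by rewrite phiD (bal2 bf).
  by rewrite phi_act -(bal3 bf) R_ract0.
apply: etrans (Ktu.2 SK sumK _ FK bFK).
rewrite /SK big_flatten big_map; apply: eq_bigr => p _.
rewrite big_map /FK /=.
under eq_bigr do rewrite phi_kk -(bal3 bf) R_ract0.
by rewrite -(afsum (fun x y => bal1 bf x y p.2)) -decE.
Qed.
End Dir1.

Section Dir2.
Variables (R : NRing) (Hf : flat_R_over_Rt R).
Variables (M N K : LMod R) (f : M -> N) (i : K -> M).
Hypotheses (Mtu : tunital_mod M) (Ntu : tunital_mod N).
Hypotheses (fD : forall x y, f (x + y) = f x + f y) (fA : forall r x, f (lact r x) = lact r (f x)).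
Hypotheses (iD : forall x y, i (x + y) = i x + i y) (iA : forall r x, i (lact r x) = lact r (i x)).
Hypotheses (iinj : injective i) (Hker : forall m : M, f m = 0 <-> exists k : K, i k = m).

Local Notation nm := (fun x y : R => nmul x y).
Local Notation TM := (@tensLMod R R M nm (@lact R M) (@compat_nmul R)).
Local Notation tpM := (tpure nm (@lact R M)).
Local Notation tclM := (tcls nm (@lact R M)).

Lemma uinj_i : urt_linear (N := toU K) (N' := toU M) i.
Proof.
split=> // a x; rewrite /= /uact_of iD iA.
by rewrite (afMz iD).
Qed.

Lemma dir2_inj s : \sum_(p <- s) lact p.1 p.2 = 0 -> tensor_zero nm (@lact R K) s.
Proof.
move=> Hs; apply/tz_conv.
apply: (Hf uinj_i iinj); apply/tz_conv.
apply: Mtu.2; rewrite big_map /=.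
under eq_bigr do rewrite -iA.
by rewrite -(afsum iD) Hs (af0 iD).
Qed.

Definition IP (n : N) : Prop := exists m, f m = n.
Lemma IP0 : IP 0. Proof. by exists 0; rewrite (af0 fD). Qed.
Lemma IPB x y : IP x -> IP y -> IP (x - y).
Proof. by move=> [m <-] [m' <-]; exists (m - m'); rewrite (afB fD). Qed.
Definition IZ : zsub N := ZSub IP0 IPB.
Lemma IZact r x : IZ x -> IZ (lact r x).
Proof. by move=> [m <-]; exists (lact r m); rewrite fA. Qed.
Definition IL := @subLMod R N IZ IZact.

Lemma uinj_v : urt_linear (N := toU IL) (N' := toU N) (fun y : IL => proj1_sig y).
Proof.
split=> // a x; rewrite /= /uact_of; congr (_ + _).
exact: (afMz (@svalD _ IZ)).
Qed.

Definition KZ : zsub TM := imZ nm (@lact R M) i.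
Definition pre (y : IL) : M := proj1_sig (cid (proj2_sig y)).
Lemma preE y : f (pre y) = proj1_sig y.
Proof. by rewrite /pre; case: (cid _). Qed.
Definition beta (r : R) (y : IL) : quo KZ := qcls KZ (tpM r (pre y)).
Lemma tpM1 x y m : tpM (x + y) m = tpM x m + tpM y m.
Proof. exact: (bal1 (tpure_bal _ _)). Qed.
Lemma tpM2 x m n : tpM x (m + n) = tpM x m + tpM x n.
Proof. exact: (bal2 (tpure_bal _ _)). Qed.
Lemma tpM3 x a m : tpM (nmul x a) m = tpM x (lact a m).
Proof. exact: (bal3 (tpure_bal nm (@lact R M))). Qed.

Lemma betaE r y m : f m = proj1_sig y -> beta r y = qcls KZ (tpM r m).
Proof.
move=> Em; apply/qcls_eq.
have : f (pre y - m) = 0 by rewrite (afB fD) preE Em subrr.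
move/Hker => [k Ek].
rewrite -(afB (bal2 (tpure_bal nm (@lact R M)) r)) -Ek.
exact: imP_pure.
Qed.
Lemma beta_bal : balanced nm (@lact R IL) beta.
Proof.
split.
- by move=> x y m; rewrite /beta tpM1 qclsD.
- move=> x m n; rewrite (@betaE _ _ (pre m + pre n)); last by rewrite fD !preE.
  by rewrite tpM2 qclsD.
move=> x a m; rewrite (@betaE x (@lact R IL a m) (lact a (pre m))); last by rewrite fA preE.
by rewrite /beta tpM3.
Qed.

Definition mubM (r : R) (m : M) : M := lact r m.
Lemma mubM_bal : balanced nm (@lact R M) mubM.
Proof. by split=> *; rewrite /mubM ?lactDl ?lactDr ?lactA. Qed.

Lemma dir2_surj (k : K) : exists s : seq (R * K), k = \sum_(p <- s) lact p.1 p.2.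
Proof.
have [s Es] := Mtu.1 (i k).
have fik : f (i k) = 0 by apply/Hker; exists k.
have tzN : tensor_zero nm (@lact R N) (gmap f s).
  apply: Ntu.2; rewrite big_map /=.
  apply: etrans fik; rewrite Es (afsum fD); apply: eq_bigr => p _; by rewrite fA.
pose sI : seq (R * IL) := [seq (p.1, exist IZ (f p.2) (ex_intro _ p.2 erefl)) | p <- s].
have tzI : tensor_zero nm (@lact R IL) sI.
  apply/tz_conv; apply: (Hf uinj_v (@sval_inj _ IZ)); apply/tz_conv.
  suff -> : [seq (p.1, proj1_sig p.2) | p <- sI] = gmap f s by [].
  by rewrite /sI /gmap -map_comp.
have := tzI _ beta beta_bal.
rewrite big_map.
have E : \sum_(p <- s) beta (p.1, exist IZ (f p.2) (ex_intro _ p.2 erefl)).1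
   (p.1, exist IZ (f p.2) (ex_intro _ p.2 erefl)).2 = \sum_(p <- s) qcls KZ (tpM p.1 p.2).
  by apply: eq_bigr => p _; rewrite (@betaE _ _ p.2).
rewrite E.
rewrite -(afsum (@qclsD _ KZ)) -[X in qcls _ X]/(tsum tpM s) tsum_pure.
move/qcls0P => [u Eu].
exists u; apply: iinj.
rewrite Es (afsum iD).
have := congr1 (tlift mubM) Eu.
rewrite !(tliftE _ mubM_bal) /tsum big_map /mubM /= => ->.
by apply: eq_bigr => p _; rewrite iA.
Qed.

Lemma dir2_tunital : tunital_mod K.
Proof. split; [exact: dir2_surj | exact: dir2_inj]. Qed.
End Dir2.

Theorem corollary7p4 (R : NRing) :
  tunital_ring R ->
  (tunital_closed_under_kernels R <-> flat_R_over_Rt R).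
Proof.
move=> tR; split.
  move=> Hc N N' g [gD gA] ginj s Hs.
  exact: (dir1_main tR Hc gD gA ginj Hs).
move=> Hf M N K f i Mtu Ntu [fD fA] [iD iA] iinj Hker.
exact: (dir2_tunital Hf Mtu Ntu fD fA iD iA iinj Hker).
Qed.
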